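(* Let $\ell,d_1,\dots,d_\ell\in\mathbb N$, let $\mathcal L=\{-\ell,\dots,-1,1,\dots,\ell\}$, set $e_i=\operatorname{sgn}(i)d_{|i|}$ for $i\in\mathcal L$, and for $S\subseteq\mathcal L$ put $e_S=\sum_{i\in S}e_i$. Fix $\beta\in\mathbb N$ and $b_1,\dots,b_\beta\in\mathbb N$. Then $$\sum_{S_1,\dots,S_\beta}\Bigl(\sum_{i=1}^\beta e_{S_i}\Bigr)^2$$ is an integral multiple of $\sum_{i\in\mathcal L}e_i^2$, where the outer sum runs over all tuples $(S_1,\dots,S_\beta)$ of subsets $S_i\subseteq\mathcal L$ with $|S_i|=b_i$. *)

(* Defs.v *)
From mathcomp Require Import all_boot all_order all_algebra.
Set Implicit Arguments. Unset Strict Implicit. Unset Printing Implicit Defensive.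
Import Order.TTheory GRing.Theory Num.Theory.
Local Open Scope ring_scope.

(* The signed index set L = {-l,...,-1,1,...,l} is encoded as bool * 'I_l:
   (true, j) stands for +(j+1) and (false, j) for -(j+1). *)
Definition Lidx (l : nat) := (bool * 'I_l)%type.

Definition e (l : nat) (d : 'I_l -> nat) (i : Lidx l) : int :=
  if i.1 then (d i.2)%:Z else - (d i.2)%:Z.

Definition eS (l : nat) (d : 'I_l -> nat) (S : {set Lidx l}) : int :=
  \sum_(i in S) e d i.

(* Main.v *)
Require Import Defs.
From mathcomp Require Import all_boot all_order all_algebra all_fingroup.
Import Order.TTheory GRing.Theory Num.Theory.
Set Implicit Arguments. Unset Strict Implicit. Unset Printing Implicit Defensive.
Local Open Scope ring_scope.

Definition mcount l beta (S : {ffun 'I_beta -> {set Lidx l}}) (i : Lidx l) : int :=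
  \sum_(j < beta) (if i \in S j then 1 else 0).

Definition cc l beta (b : 'I_beta -> nat) (i i' : Lidx l) : int :=
  \sum_(S : {ffun 'I_beta -> {set Lidx l}} | [forall j, #|S j| == b j])
     mcount S i * mcount S i'.

Arguments cc l {beta} b i i'.

Lemma cc_perm l beta (b : 'I_beta -> nat) (s : {perm Lidx l}) i i' :
  cc l b (s i) (s i') = cc l b i i'.
Proof.
rewrite /cc (reindex_inj (h := fun S : {ffun 'I_beta -> {set Lidx l}} =>
   [ffun j => s @: S j])).
  apply: eq_big.
    move=> S /=; apply/forallP/forallP => H j; have := H j;
      by rewrite ffunE card_imset //; exact: perm_inj.
  move=> S _; rewrite /mcount; congr (_ * _); apply: eq_bigr => j _;
    by rewrite ffunE mem_imset //; exact: perm_inj.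
move=> S1 S2 /ffunP H; apply/ffunP => j; have := H j; rewrite !ffunE.
by apply: imset_inj; exact: perm_inj.
Qed.

Lemma cc_diag l beta (b : 'I_beta -> nat) i k : cc l b i i = cc l b k k.
Proof. by rewrite -(cc_perm b (tperm i k)) tpermL. Qed.

Lemma cc_off l beta (b : 'I_beta -> nat) i i' k k' :
  i != i' -> k != k' -> cc l b i i' = cc l b k k'.
Proof.
move=> nii nkk.
set u := tperm i k i'.
have nuk : u != k.
  by rewrite /u -{2}(tpermL i k) (inj_eq perm_inj) eq_sym.
rewrite -(cc_perm b (tperm i k)) -/u tpermL.
rewrite -(cc_perm b (tperm u k')) tpermL tpermD //.
by rewrite eq_sym.
Qed.

Lemma sum_e0 l (d : 'I_l -> nat) : \sum_(i : Lidx l) e d i = 0.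
Proof.
set x := \sum_(i : Lidx l) e d i.
have hx : x = - x.
  rewrite {1}/x (reindex_inj (h := fun i : Lidx l => (~~ i.1, i.2))).
    rewrite /x -sumrN; apply: eq_bigr => -[[] j] _; by rewrite /e /= ?opprK.
  by move=> [a j] [a' j'] /= [/negb_inj -> ->].
have : x + x = 0 by rewrite {1}hx addNr.
by move/eqP; rewrite -mulr2n mulrn_eq0 /= => /eqP.
Qed.

Theorem lemma6p5 (l : nat) (d : 'I_l -> nat) (beta : nat) (b : 'I_beta -> nat) :
  exists k : int,
    \sum_(S : {ffun 'I_beta -> {set Lidx l}} | [forall j, #|S j| == b j])
        (\sum_(j < beta) eS d (S j)) ^+ 2
    = k * \sum_(i : Lidx l) (e d i) ^+ 2.
Proof.
have E1 : forall S : {ffun 'I_beta -> {set Lidx l}},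
    \sum_(j < beta) eS d (S j) = \sum_(i : Lidx l) mcount S i * e d i.
  move=> S; rewrite /eS /mcount.
  under eq_bigr do rewrite big_mkcond.
  rewrite exchange_big; apply: eq_bigr => i _; rewrite mulr_suml.
  by apply: eq_bigr => j _; case: (i \in S j); rewrite ?mul1r ?mul0r.
have E2 : \sum_(S : {ffun 'I_beta -> {set Lidx l}} | [forall j, #|S j| == b j])
        (\sum_(j < beta) eS d (S j)) ^+ 2
   = \sum_(i : Lidx l) \sum_(i' : Lidx l) cc l b i i' * (e d i * e d i').
  under eq_bigr do rewrite E1 expr2 mulr_suml.
  under eq_bigr do under eq_bigr do rewrite mulr_sumr.
  rewrite exchange_big; apply: eq_bigr => i _.
  rewrite exchange_big; apply: eq_bigr => i' _.
  rewrite /cc mulr_suml; apply: eq_bigr => S _.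
  by rewrite mulrACA.
rewrite E2.
case: l d E1 E2 => [|n] d _ _.
  by exists 0; rewrite big1 ?mul0r // => -[? [? //]].
set i0 : Lidx n.+1 := (true, ord0).
set i1 : Lidx n.+1 := (false, ord0).
set al := cc n.+1 b i0 i0.
set ga := cc n.+1 b i0 i1.
have hc : forall i i', cc n.+1 b i i' = ga + (al - ga) * (i == i')%:R.
  move=> i i'; case: eqVneq => [->|ne].
    by rewrite mulr1 addrC subrK /al (cc_diag b i' i0).
  by rewrite mulr0 addr0 /ga (cc_off b (k:=i0) (k':=i1) ne).
exists (al - ga); rewrite mulr_sumr; apply: eq_bigr => i _.
under eq_bigr do rewrite hc mulrDl.
rewrite big_split /=.
have -> : \sum_(i' : Lidx n.+1) ga * (e d i * e d i') = 0.
  under eq_bigr do rewrite mulrA.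
  by rewrite -mulr_sumr sum_e0 mulr0.
rewrite add0r (bigD1 i) //= big1 ?addr0 ?eqxx ?mulr1 ?expr2 //.
by move=> j /negbTE; rewrite eq_sym => ->; rewrite mulr0 mul0r.
Qed.
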